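(* Let $G=(V,E)$ be an undirected graph (finite or infinite) and $M=M(S)$ a multiplex of $G$ generated by a simplex $S$, with $\mathrm{rank}(M)\ge2$. Then for every $x\in\widetilde M$ there exist two color classes $\widehat A,\widehat B\subseteq M$ with $\widetilde A\setminus\widetilde B\neq\emptyset$ and $\widetilde B\setminus\widetilde A\neq\emptyset$ such that $x\in\widetilde A\cap\widetilde B$.
   Context: A graph $G=(V,E)$ has vertex set $V$ and edge set $E\subseteq V^2$; it is undirected if $E$ is irreflexive and symmetric. Implication classes: on $E$ define $(a,b)\Gamma(a',b')$ iff either $a=a'$ and $(b,b')\notin E$, or $b=b'$ and $(a,a')\notin E$; the classes of the transitive closure $\Gamma^*$ are the implication classes. For an implication class $A$, $A^{-1}=\{(b,a):(a,b)\in A\}$ and the color class is $\widehat A=A\cup A^{-1}$; $\widetilde A$ is the set of vertices spanned by $\widehat A$. A simplex of rank $r\ge1$ is a complete sub-graph $S=(V_S,E_S)$ of $G$ on $r+1$ vertices whose distinct undirected edges lie in distinct color classes. The multiplex generated by $S$ is $M(S)=\bigcup\{\widehat A:\widehat A\text{ a color class},\ \widehat A\cap E_S\neq\emptyset\}$, of rank $r$; $\widetilde M$ is the set of vertices spanned by $M$. *)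

(* Defs.v *)
From Stdlib Require Import Relations.

Section Defs.
Variable V : Type.
Variable E : V -> V -> Prop.

Definition undirected : Prop :=
  (forall a, ~ E a a) /\ (forall a b, E a b -> E b a).

Definition Gamma (p q : V * V) : Prop :=
  E (fst p) (snd p) /\ E (fst q) (snd q) /\
  ((fst p = fst q /\ ~ E (snd p) (snd q)) \/
   (snd p = snd q /\ ~ E (fst p) (fst q))).

Definition GammaStar : V * V -> V * V -> Prop := clos_trans (V * V) Gamma.

Definition impl_class (a b : V) (p : V * V) : Prop := GammaStar (a, b) p.

Definition color_class (a b : V) (p : V * V) : Prop :=
  impl_class a b p \/ impl_class a b (snd p, fst p).

Definition spanned (C : V * V -> Prop) (x : V) : Prop :=
  exists y, C (x, y) \/ C (y, x).

(* a simplex of rank r: vertices f 0, ..., f r, pairwise distinct and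
   pairwise adjacent, distinct undirected edges in distinct color classes *)
Definition simplex (r : nat) (f : nat -> V) : Prop :=
  1 <= r /\
  (forall i j, i <= r -> j <= r -> i <> j -> f i <> f j) /\
  (forall i j, i <= r -> j <= r -> i <> j -> E (f i) (f j)) /\
  (forall i j k l, i <= r -> j <= r -> k <= r -> l <= r -> i <> j -> k <> l ->
     ~ ((i = k /\ j = l) \/ (i = l /\ j = k)) ->
     ~ color_class (f i) (f j) (f k, f l)).

Definition multiplex (r : nat) (f : nat -> V) (p : V * V) : Prop :=
  exists i j, i <= r /\ j <= r /\ i <> j /\ color_class (f i) (f j) p.

End Defs.

Arguments undirected {V} E.
Arguments Gamma {V} E p q.
Arguments GammaStar {V} E.
Arguments impl_class {V} E a b p.
Arguments color_class {V} E a b p.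
Arguments spanned {V} C x.
Arguments simplex {V} E r f.
Arguments multiplex {V} E r f p.

(* Main.v *)
Require Import Defs.
From Stdlib Require Import Relations Classical Lia Arith PeanoNat.

Lemma Gsym {V} (E : V -> V -> Prop) : undirected E ->
  forall p q, Gamma E p q -> Gamma E q p.
Proof.
  intros [Hirr Hs] [a b] [c d]; unfold Gamma; simpl.
  intros [H1 [H2 [[-> H3]|[-> H3]]]]; repeat split; auto; try (intro; apply H3; auto; fail); try (left; split; auto; fail); try (right; split; auto; fail).
Qed.

Lemma Grev {V} (E : V -> V -> Prop) : undirected E ->
  forall p q, Gamma E p q -> Gamma E (snd p, fst p) (snd q, fst q).
Proof.
  intros [Hirr Hs] [a b] [c d]; unfold Gamma; simpl.
  intros [H1 [H2 [[-> H3]|[-> H3]]]]; repeat split; auto; try (intro; apply H3; auto; fail); try (left; split; auto; fail); try (right; split; auto; fail).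
Qed.

Lemma GSsym {V} (E : V -> V -> Prop) : undirected E ->
  forall p q, GammaStar E p q -> GammaStar E q p.
Proof.
  intros HU p q H; induction H.
  - apply t_step; apply Gsym; auto.
  - eapply t_trans; eauto.
Qed.

Lemma GSrev {V} (E : V -> V -> Prop) : undirected E ->
  forall p q, GammaStar E p q -> GammaStar E (snd p, fst p) (snd q, fst q).
Proof.
  intros HU p q H; induction H.
  - apply t_step; apply Grev; auto.
  - eapply t_trans; eauto.
Qed.

Lemma GSrefl {V} (E : V -> V -> Prop) : undirected E ->
  forall a b, E a b -> GammaStar E (a,b) (a,b).
Proof.
  intros [Hirr Hs] a b H; apply t_step; unfold Gamma; simpl; auto.
Qed.

Lemma GSstep {V} (E : V -> V -> Prop) p q r : GammaStar E p q -> Gamma E q r -> GammaStar E p r.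
Proof. intros; eapply t_trans; eauto; apply t_step; auto. Qed.

Definition Inv {V} (E : V -> V -> Prop) a b c (q : V * V) :=
  E a (fst q) /\ E a (snd q) /\ GammaStar E (a,b) (a, fst q) /\ GammaStar E (a,c) (a, snd q).

Lemma tri_step {V} (E : V -> V -> Prop) (HU : undirected E) a b c
  (N1 : ~ color_class E a b (b,c)) (N2 : ~ color_class E a c (b,c)) :
  forall q q', GammaStar E (b,c) q -> Inv E a b c q -> Gamma E q q' -> Inv E a b c q'.
Proof.
  pose proof HU as [Hirr Hs].
  intros [b' c'] [b'' c''] HA [I1 [I2 [I3 I4]]] HG.
  pose proof HG as [G1 [G2 [[E1 E2]|[E1 E2]]]]; simpl in *; subst.
  - assert (Hac : E a c'').
    { destruct (classic (E a c'')) as [h|h]; auto. exfalso; apply N1; right.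
      assert (X : Gamma E (b'', a) (b'', c'')) by (unfold Gamma; simpl; auto).
      assert (Y : GammaStar E (b,c) (b'', a)).
      { eapply t_trans. apply (GSstep _ _ _ _ HA HG). apply t_step, Gsym; auto. }
      apply (GSrev E HU) in Y; simpl in Y.
      eapply t_trans. exact I3. apply GSsym; auto. }
    unfold Inv; simpl; repeat split; auto.
    apply (GSstep _ _ _ _ I4). unfold Gamma; simpl; auto.
  - assert (Hab : E a b'').
    { destruct (classic (E a b'')) as [h|h]; auto. exfalso; apply N2; left.
      assert (X : Gamma E (c'', a) (c'', b'')) by (unfold Gamma; simpl; auto).
      assert (Y : GammaStar E (b,c) (b'', c'')) by apply (GSstep _ _ _ _ HA HG).
      apply (GSrev E HU) in Y; simpl in Y.
      assert (Z : GammaStar E (c,b) (c'', a)).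
      { eapply t_trans. exact Y. apply t_step, Gsym; auto. }
      apply (GSrev E HU) in Z; simpl in Z.
      eapply t_trans. exact I4. apply GSsym; auto. }
    unfold Inv; simpl; repeat split; auto.
    apply (GSstep _ _ _ _ I3). unfold Gamma; simpl; auto.
Qed.

Lemma tri {V} (E : V -> V -> Prop) (HU : undirected E) a b c
  (Hab : E a b) (Hac : E a c)
  (N1 : ~ color_class E a b (b,c)) (N2 : ~ color_class E a c (b,c)) :
  forall q, GammaStar E (b,c) q -> Inv E a b c q.
Proof.
  intros q Hq.
  apply clos_trans_tn1 in Hq.
  induction Hq as [q Hq | q q' Hqq' Hq IH].
  - assert (Hbc : E b c) by (destruct Hq as [h _]; exact h).
    apply (tri_step E HU a b c N1 N2 (b,c) q); auto.
    + apply GSrefl; auto.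
    + unfold Inv; simpl; repeat split; auto; apply GSrefl; auto.
  - apply (tri_step E HU a b c N1 N2 q q'); auto. apply clos_tn1_trans; auto.
Qed.

Lemma span_inv {V} (E : V -> V -> Prop) b c x :
  spanned (color_class E b c) x ->
  exists q, GammaStar E (b,c) q /\ (x = fst q \/ x = snd q).
Proof.
  intros [y [[H|H]|[H|H]]]; unfold impl_class in H; eexists; split; eauto; simpl; auto.
Qed.

Lemma apex {V} (E : V -> V -> Prop) (HU : undirected E) a b c
  (Hab : E a b) (Hac : E a c)
  (N1 : ~ color_class E a b (b,c)) (N2 : ~ color_class E a c (b,c)) :
  ~ spanned (color_class E b c) a.
Proof.
  intros H; apply span_inv in H as [q [Hq [e|e]]];
  destruct (tri E HU a b c Hab Hac N1 N2 q Hq) as [I1 [I2 _]]; subst;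
  destruct HU as [Hirr _]; eapply Hirr; eauto.
Qed.

Theorem proposition4p3 (V : Type) (E : V -> V -> Prop) (r : nat) (f : nat -> V) :
  undirected E ->
  simplex E r f ->
  2 <= r ->
  forall x : V, spanned (multiplex E r f) x ->
  exists a b c d : V,
    E a b /\ E c d /\
    (forall p, color_class E a b p -> multiplex E r f p) /\
    (forall p, color_class E c d p -> multiplex E r f p) /\
    (exists v, spanned (color_class E a b) v /\ ~ spanned (color_class E c d) v) /\
    (exists v, spanned (color_class E c d) v /\ ~ spanned (color_class E a b) v) /\
    spanned (color_class E a b) x /\ spanned (color_class E c d) x.
Proof.
  intros HU [_ [Hd [HE HC]]] Hr x [y Hx].
  assert (exists i j, i <= r /\ j <= r /\ i <> j /\ spanned (color_class E (f i) (f j)) x)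
    as [i [j [Hi [Hj [Hij Hsp]]]]].
  { destruct Hx as [[i [j [? [? [? H]]]]]|[i [j [? [? [? H]]]]]];
      exists i, j; repeat split; auto; exists y; auto. }
  assert (exists k, k <= r /\ k <> i /\ k <> j) as [k [Hk [Hki Hkj]]].
  { destruct (Nat.eq_dec i 0); destruct (Nat.eq_dec j 0);
    destruct (Nat.eq_dec i 1); destruct (Nat.eq_dec j 1).
    all: first [exists 0; lia | exists 1; lia | exists 2; lia]. }
  assert (Cn : forall i j k l, i <= r -> j <= r -> k <= r -> l <= r -> i <> j -> k <> l ->
     ~ ((i = k /\ j = l) \/ (i = l /\ j = k)) -> ~ color_class E (f i) (f j) (f k, f l))
    by exact HC.
  assert (Ecl : forall i j, i <= r -> j <= r -> i <> j -> forall p,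
     color_class E (f i) (f j) p -> multiplex E r f p)
    by (intros i0 j0 ? ? ? p Hp; exists i0, j0; auto).
  assert (Sp1 : forall i j, i <= r -> j <= r -> i <> j -> spanned (color_class E (f i) (f j)) (f i)).
  { intros i0 j0 ? ? ?; exists (f j0); left; left; apply GSrefl; auto; apply HE; auto. }
  assert (Sp2 : forall i j, i <= r -> j <= r -> i <> j -> spanned (color_class E (f i) (f j)) (f j)).
  { intros i0 j0 ? ? ?; exists (f i0); left; right; apply GSrefl; auto; apply HE; auto. }
  assert (Ap : forall i j k, i <= r -> j <= r -> k <= r -> i <> j -> i <> k -> j <> k ->
     ~ spanned (color_class E (f j) (f k)) (f i)).
  { intros. apply apex; auto. apply Cn; lia. apply Cn; lia. }
  destruct (span_inv _ _ _ _ Hsp) as [q [Hq [e|e]]].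
  - destruct (tri E HU (f k) (f i) (f j) (HE k i ltac:(lia) ltac:(lia) ltac:(lia))
      (HE k j ltac:(lia) ltac:(lia) ltac:(lia)) ltac:(apply Cn; lia) ltac:(apply Cn; lia) q Hq)
      as [_ [_ [I3 _]]].
    exists (f i), (f j), (f k), (f i).
    split; [apply HE; lia|]. split; [apply HE; lia|].
    split; [apply Ecl; lia|]. split; [apply Ecl; lia|].
    split; [exists (f j); split; [first [apply Sp1; lia | apply Sp2; lia] | apply Ap; lia]|].
    split; [exists (f k); split; [first [apply Sp1; lia | apply Sp2; lia] | apply Ap; lia]|].
    split; [exact Hsp|].
    exists (f k); left; right; subst; exact I3.
  - destruct (tri E HU (f k) (f i) (f j) (HE k i ltac:(lia) ltac:(lia) ltac:(lia))
      (HE k j ltac:(lia) ltac:(lia) ltac:(lia)) ltac:(apply Cn; lia) ltac:(apply Cn; lia) q Hq)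
      as [_ [_ [_ I4]]].
    exists (f i), (f j), (f k), (f j).
    split; [apply HE; lia|]. split; [apply HE; lia|].
    split; [apply Ecl; lia|]. split; [apply Ecl; lia|].
    split; [exists (f i); split; [first [apply Sp1; lia | apply Sp2; lia] | apply Ap; lia]|].
    split; [exists (f k); split; [first [apply Sp1; lia | apply Sp2; lia] | apply Ap; lia]|].
    split; [exact Hsp|].
    exists (f k); left; right; subst; exact I4.
Qed.
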